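(* Let $\beta\ge0$. If a symmetric restaking network $G$ admits a $\beta$-costly attack, then it admits a $\beta$-costly attack that is consolidated.
   Context: A restaking network is a tuple $G=(V,S,\sigma,w,\theta,\pi)$ with finite nonempty validator set $V$, finite service set $S$, stake $\sigma:V\to\mathbb{R}_{>0}$, allocation $w:V\times S\to\mathbb{R}_{\ge0}$ with $w(v,s)\le\sigma(v)$, thresholds $\theta:S\to[0,1]$, prizes $\pi:S\to\mathbb{R}_{>0}$. An attack is $\alpha:V\times S\to\mathbb{R}_{\ge0}$ with $\alpha(v,s)\le w(v,s)$; attacked services $S_\alpha=\{s:\sum_v\alpha(v,s)\ge\theta(s)\sum_v w(v,s)\}$; validator cost $c_v(\alpha)=\min(\sigma(v),\sum_{s\in S_\alpha}\alpha(v,s))$; total cost $C(\alpha)=\sum_vc_v(\alpha)$; prize $\Pi(\alpha)=\sum_{s\in S_\alpha}\pi(s)$. $\beta$-costly: $S_\alpha\ne\emptyset$ and $C(\alpha)\le\Pi(\alpha)+\beta$. $G$ is symmetric if all validators have the same stake $\sigma$, for each $s$ all validators have the same allocation $w(s)$, and all services have the same threshold $\theta$. Let $m=|V|$ and $V=\{v_1,\dots,v_m\}$ (any ordering). An attack is consolidated if for every $s\in S_\alpha$ and $i\in\{1,\dots,m\}$: $\alpha(v_i,s)=w(s)$ if $i\le\lfloor\theta m\rfloor$; $\alpha(v_i,s)=(\theta m-\lfloor\theta m\rfloor)w(s)$ if $i=\lfloor\theta m\rfloor+1$; $\alpha(v_i,s)=0$ otherwise. *)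

(* Defs.v *)
From HB Require Import structures.
From mathcomp Require Import all_boot all_order all_algebra.
From mathcomp Require Import reals.
Set Implicit Arguments. Unset Strict Implicit. Unset Printing Implicit Defensive.
Import Order.TTheory GRing.Theory Num.Theory.
Local Open Scope ring_scope.

Section Restaking.
Variables (R : realType) (V S : finType).
Implicit Types (sigma : V -> R) (w alpha : V -> S -> R) (theta pi : S -> R).

Definition is_network sigma w theta pi : Prop :=
  (0 < #|V|)%N /\
  (forall v, 0 < sigma v) /\
  (forall v s, 0 <= w v s /\ w v s <= sigma v) /\
  (forall s, 0 <= theta s <= 1) /\
  (forall s, 0 < pi s).

Definition is_attack w alpha : Prop :=
  forall v s, 0 <= alpha v s /\ alpha v s <= w v s.

Definition attacked w theta alpha (s : S) : bool :=
  theta s * (\sum_v w v s) <= \sum_v alpha v s.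

Definition vcost sigma w theta alpha (v : V) : R :=
  Num.min (sigma v) (\sum_(s | attacked w theta alpha s) alpha v s).

Definition total_cost sigma w theta alpha : R :=
  \sum_v vcost sigma w theta alpha v.

Definition prize w theta pi alpha : R :=
  \sum_(s | attacked w theta alpha s) pi s.

Definition beta_costly sigma w theta pi (beta : R) alpha : Prop :=
  (exists s, attacked w theta alpha s) /\
  total_cost sigma w theta alpha <= prize w theta pi alpha + beta.

Definition symmetric_network sigma w theta : Prop :=
  (exists s0 : R, forall v, sigma v = s0) /\
  (forall s, exists ws : R, forall v, w v s = ws) /\
  (exists t0 : R, forall s, theta s = t0).

(* Consolidated w.r.t. an ordering ord : V -> 'I_m (0-based; validator v is
   v_{ord v + 1}).  In a symmetric network w v s = w(s) and theta s = theta. *)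
Definition consolidated w theta (ord : V -> 'I_#|V|) alpha : Prop :=
  forall s, attacked w theta alpha s -> forall v,
    let m := #|V| in
    let fl := Num.floor (theta s * m%:R) in
    alpha v s =
      if ((ord v)%:Z < fl)%R then w v s
      else if (ord v)%:Z == fl then (theta s * m%:R - fl%:~R) * w v s
      else 0.

End Restaking.

(* Main.v *)
Require Import Defs.
From HB Require Import structures.
From mathcomp Require Import all_boot all_order all_algebra.
From mathcomp Require Import reals.
From mathcomp Require Import lra zify.
Import Order.TTheory GRing.Theory Num.Theory.
Local Open Scope ring_scope.

Lemma sum_pat (R : realType) (m n : nat) (a b : R) :
  \sum_(i < m) (if (i < n)%N then a else if i == n :> nat then b else 0)
  = (minn n m)%:R * a + (if (n < m)%N then b else 0).
Proof.
elim: m => [|m IH]; first by rewrite big_ord0 /= minn0 mul0r addr0.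
rewrite big_ord_recr /= IH.
case: (ltngtP m n) => H.
- have -> : (n < m.+1)%N = false by lia.
  have -> : minn n m.+1 = m.+1 by lia.
  rewrite mulrSr; lra.
- have -> : (n < m.+1)%N = true by lia.
  have -> : minn n m.+1 = n by lia.
  lra.
- subst m. rewrite ltnSn.
  have -> : minn n n.+1 = n by lia.
  lra.
Qed.

Lemma cost_lb (R : realType) (V : finType) (X : V -> R) (s0 W fr : R) (n : nat) :
  0 < s0 -> 0 <= fr -> (forall v, 0 <= X v <= W) ->
  (n%:R + fr) * W <= \sum_v X v ->
  n%:R * Num.min s0 W + Num.min s0 (fr * W) <= \sum_v Num.min s0 (X v).
Proof.
move=> s0p fr0 HX HS.
pose P := [pred v | s0 <= X v].
rewrite (bigID P) /=.
rewrite (eq_bigr (fun _ => s0)); last by move=> v /= H; rewrite minEle H.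
rewrite (eq_bigr (fun v => X v) (P := fun v => ~~ P v)); last first.
  by move=> v /= H; rewrite minEle ifN //.
move: HS; rewrite (bigID P) /= => HS.
have HPX : \sum_(i | P i) X i <= \sum_(i | P i) W.
  by apply: ler_sum => v _; case/andP: (HX v).
rewrite !sumr_const in HPX *.
set k := #|_| in HPX *.
rewrite /P /= in HPX.
have A0 : 0 <= \sum_(i | ~~ (s0 <= X i)) X i by apply: sumr_ge0 => v _; case/andP: (HX v).
move: HS HPX A0; move: (\sum_(i | ~~ (s0 <= X i)) X i) (\sum_(i | s0 <= X i) X i) => A B HS HPX A0.
rewrite -[W *+ k]mulr_natr in HPX; rewrite -[s0 *+ k]mulr_natr.
have c1 : Num.min s0 W <= s0 by rewrite ge_min lexx.
have c2 : Num.min s0 W <= W by rewrite ge_min lexx orbT.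
have d1 : Num.min s0 (fr * W) <= s0 by rewrite ge_min lexx.
have d2 : Num.min s0 (fr * W) <= fr * W by rewrite ge_min lexx orbT.
have k0 : 0 <= k%:R :> R by rewrite ler0n.
move: c1 c2 d1 d2; move: (Num.min s0 W) (Num.min s0 (fr * W)) => c d c1 c2 d1 d2.
case: (leqP k n) => Hk.
- have Hk' : k%:R <= n%:R :> R by rewrite ler_nat.
  move: Hk' k0 HPX HS; move: (k%:R) (n%:R) => kR nR Hk' k0 HPX HS.
  have e1 : 0 <= (nR - kR) * (W - c) by apply: mulr_ge0; lra.
  have e2 : 0 <= kR * (s0 - c) by apply: mulr_ge0; lra.
  have e3 : 0 <= fr * W - d by lra.
  lra.
- have Hk' : n%:R + 1 <= k%:R :> R by rewrite natr1 ler_nat.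
  have n0 : 0 <= n%:R :> R by rewrite ler0n.
  move: Hk' k0 n0 HPX HS; move: (k%:R) (n%:R) => kR nR Hk' k0 n0 HPX HS.
  have e1 : 0 <= (kR - nR - 1) * s0 by apply: mulr_ge0; lra.
  have e2 : 0 <= nR * (s0 - c) by apply: mulr_ge0; lra.
  lra.
Qed.

Theorem mainTheorem15 (R : realType) (V S : finType)
  (sigma : V -> R) (w : V -> S -> R) (theta pi : S -> R) (beta : R)
  (ord : V -> 'I_#|V|) :
  is_network sigma w theta pi ->
  symmetric_network sigma w theta ->
  bijective ord ->
  0 <= beta ->
  (exists alpha, is_attack w alpha /\ beta_costly sigma w theta pi beta alpha) ->
  exists alpha, is_attack w alpha /\ beta_costly sigma w theta pi beta alpha /\
    consolidated w theta ord alpha.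
Proof.
move=> [mpos [sig_pos [wb [thb pib]]]] [[s0 Hs0] [Hws [t0 Ht0]]] bij beta0
  [alpha [Hatt [[sa Hsa] Hcost]]].
have [g ordK gK] := bij.
pose v0 := g (Ordinal mpos).
have Hw : forall v s, w v s = w v0 s.
  by move=> v s; case: (Hws s) => ws H; rewrite !H.
pose att := attacked w theta alpha.
pose alpha' v s := if att s then
  (if (ord v)%:Z < Num.floor (theta s * #|V|%:R) then w v s
   else if (ord v)%:Z == Num.floor (theta s * #|V|%:R) then
     (theta s * #|V|%:R - (Num.floor (theta s * #|V|%:R))%:~R) * w v s
   else 0) else 0.
exists alpha'.
have t0b : 0 <= t0 <= 1 by rewrite -(Ht0 sa); exact: thb.
have s0p : 0 < s0 by rewrite -(Hs0 v0).
set m := #|V| in alpha' *.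
have m0 : 0 <= m%:R :> R by rewrite ler0n.
have tm0 : 0 <= t0 * m%:R by apply: mulr_ge0; lra.
have tm1 : t0 * m%:R <= m%:R by rewrite ler_piMl //; lra.
set fl := Num.floor (t0 * m%:R).
have [n hn] : exists n : nat, fl = n%:Z.
  by exists `|fl|%N; rewrite gez0_abs // floor_ge0.
have fl1 := floor_le (t0 * m%:R).
have fl2 := floorD1_gt (t0 * m%:R).
rewrite -/fl hn in fl1 fl2.
have fl2' : t0 * m%:R < n%:R + 1 by move: fl2; rewrite intrD.
have fl1' : n%:R <= t0 * m%:R by [].
pose fr := t0 * m%:R - n%:R.
have fr0 : 0 <= fr by rewrite /fr; lra.
have fr1 : fr < 1 by rewrite /fr; lra.
have nm : (n <= m)%N by rewrite -(ler_nat R); lra.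
have frm : (if (n < m)%N then fr else 0) = fr.
  case: ifP => // /negbT; rewrite -leqNgt => Hmn.
  have e : m%:R = n%:R :> R by congr (_%:R); apply/eqP; rewrite eqn_leq Hmn nm.
  by rewrite /fr; lra.
pose c (i : nat) : R := if (i < n)%N then 1 else if i == n then fr else 0.
have alpha'E : forall v s, alpha' v s = if att s then c (ord v) * w v0 s else 0.
  move=> v s; rewrite /alpha' Ht0 -/fl hn ltz_nat eqz_nat /c.
  case: (att s) => //; rewrite Hw.
  case: ifP => _; first by rewrite mul1r.
  by case: ifP => _; rewrite ?mul0r.
have sumc : \sum_v c (ord v) = n%:R + fr.
  have -> : \sum_v c (ord v) = \sum_(i < m) c i.
    by rewrite (reindex ord (onW_bij _ bij)).
  by rewrite /c sum_pat mulr1 frm (minn_idPl nm).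
have sumw : forall s, \sum_v w v s = w v0 s *+ m.
  by move=> s; rewrite (eq_bigr (fun _ => w v0 s)) ?sumr_const // => v _; rewrite Hw.
have wv0 : forall s, 0 <= w v0 s by move=> s; case: (wb v0 s).
have attE : forall s, attacked w theta alpha' s = att s.
  move=> s; rewrite /attacked.
  have -> : \sum_v alpha' v s = if att s then (n%:R + fr) * w v0 s else 0.
    rewrite (eq_bigr (fun v => if att s then c (ord v) * w v0 s else 0)); last first.
      by move=> v _; rewrite alpha'E.
    case: (att s); last by rewrite big1.
    by rewrite -mulr_suml sumc.
  rewrite sumw Ht0.
  case Hs: (att s).
  - rewrite /fr -[w v0 s *+ m]mulr_natr; lra.
  - apply/negbTE; rewrite -ltNge.
    move: Hs; rewrite /att /attacked sumw Ht0 => /negbT; rewrite -ltNge.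
    apply: le_lt_trans; apply: sumr_ge0 => v _; by case: (Hatt v s).
have c01 : forall i, 0 <= c i <= 1.
  by move=> i; rewrite /c; case: ifP => _; [lra|case: ifP => _; lra].
split.
  move=> v s; rewrite alpha'E Hw; case: (att s); last by split.
  have := c01 (ord v); have := wv0 s; move: (c (ord v)) (w v0 s) => x y ? ?.
  split; [apply: mulr_ge0; lra | nra].
split; last first.
  move=> s; rewrite attE => Hs v /=.
  by rewrite /alpha' Hs.
split; first by exists sa; rewrite attE.
have Hprize : prize w theta pi alpha' = prize w theta pi alpha.
  by apply: eq_bigl => s; rewrite attE.
suff : total_cost sigma w theta alpha' <= total_cost sigma w theta alpha.
  by move: Hcost; rewrite Hprize; lra.
pose W := \sum_(s | att s) w v0 s.
have W0 : 0 <= W by apply: sumr_ge0.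
have lhs : total_cost sigma w theta alpha' = n%:R * Num.min s0 W + Num.min s0 (fr * W).
  pose d (i : nat) := if (i < n)%N then Num.min s0 W
                      else if i == n then Num.min s0 (fr * W) else 0.
  have -> : total_cost sigma w theta alpha' = \sum_v d (ord v).
    apply: eq_bigr => v _; rewrite /vcost Hs0.
    rewrite (eq_bigl (fun s => att s)); last by move=> s; rewrite attE.
    rewrite (eq_bigr (fun s => c (ord v) * w v0 s)); last first.
      by move=> s Hs; rewrite alpha'E Hs.
    rewrite -mulr_sumr -/W /d /c.
    case: ifP => _; first by rewrite mul1r.
    case: ifP => _ //.
    by rewrite mul0r minEle ifN // -ltNge.
  have -> : \sum_v d (ord v) = \sum_(i < m) d i.
    by rewrite (reindex ord (onW_bij _ bij)).
  rewrite /d sum_pat (minn_idPl nm).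
  case: ifP => // /negbT; rewrite -leqNgt => Hmn.
  have e : m%:R = n%:R :> R by congr (_%:R); apply/eqP; rewrite eqn_leq Hmn nm.
  have -> : fr = 0 by rewrite /fr; lra.
  by rewrite mul0r [Num.min s0 0]minEle ifN ?addr0 // -ltNge.
rewrite lhs.
have -> : total_cost sigma w theta alpha = \sum_v Num.min s0 (\sum_(s | att s) alpha v s).
  by apply: eq_bigr => v _; rewrite /vcost Hs0.
apply: cost_lb => //.
  move=> v; apply/andP; split; first by apply: sumr_ge0 => s _; case: (Hatt v s).
  by apply: ler_sum => s _; rewrite -(Hw v); case: (Hatt v s).
rewrite exchange_big /=.
have -> : (n%:R + fr) * W = \sum_(s | att s) theta s * \sum_v w v s.
  rewrite mulr_sumr; apply: eq_bigr => s _.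
  rewrite sumw Ht0 -[w v0 s *+ m]mulr_natr /fr; lra.
by apply: ler_sum => s Hs.
Qed.
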